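(* For complex parameters $x_0,x_1,y_0,y_1,y_2\in\mathbb{C}$, consider the polynomial \[ p(x,y)(s) = (s^4+2s^2)(x_0+x_1 s+s^2)+y_0+y_1 s+y_2 s^2 \] in the complex indeterminate $s$, and let \[ x_0^*=7,\quad x_1^* = \tfrac{6\sqrt{15}}{5},\quad y_0^* = \tfrac{27}{125},\quad y_1^* = \tfrac{54\sqrt{15}}{125},\quad y_2^*= -\tfrac{43}{5}. \] Then the abscissa $\alpha(p(x,y))$, viewed as a function of $(x_0,x_1,y_0,y_1,y_2)\in\mathbb{C}^5$, is locally minimized at $(x_0^*,x_1^*,y_0^*,y_1^*,y_2^* )$. Furthermore, there is a positive constant $\tau$ such that for all $(x_0,x_1,y_0,y_1,y_2)$ sufficiently close to $(x_0^*,x_1^*,y_0^*,y_1^*,y_2^* )$, \[ \alpha(p(x,y)) \geq \alpha(p(x^*,y^* )) + \tau \|d\|, \] where $d = [x_0 - x_0^*,\ x_1 - x_1^*,\ y_0 - y_0^*,\ y_1 - y_1^*,\ y_2 - y_2^*]\in\mathbb{C}^5$.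
   Context: For a polynomial $q$ with complex coefficients, its abscissa is $\alpha(q)=\max\{\Re z : q(z)=0\}$. Here $x(s)=x_0+x_1s+s^2$ and $y(s)=y_0+y_1s+y_2s^2$, and $p(x^*,y^* )$ denotes $p$ evaluated at the starred coefficients. $\|\cdot\|$ denotes the Euclidean norm on $\mathbb{C}^5$. *)

(* Defs.v *)
From HB Require Import structures.
From mathcomp Require Import all_boot all_order all_algebra.
From mathcomp Require Import boolp classical_sets reals.
From mathcomp.real_closed Require Import complex.
Set Implicit Arguments. Unset Strict Implicit. Unset Printing Implicit Defensive.
Import Order.TTheory GRing.Theory Num.Theory.
Local Open Scope ring_scope.
Local Open Scope classical_set_scope.
Local Open Scope complex_scope.

Definition abscissa (R : realType) (q : {poly R[i]}) : R :=
  sup [set complex.Re z | z in [set z : R[i] | root q z]].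

Definition pxy (R : realType) (x0 x1 y0 y1 y2 : R[i]) : {poly R[i]} :=
  ('X^4 + 2%:R *: 'X^2) * (x0%:P + x1 *: 'X + 'X^2)
  + (y0%:P + y1 *: 'X + y2 *: 'X^2).

Definition sqmod (R : realType) (z : R[i]) : R :=
  complex.Re z ^+ 2 + complex.Im z ^+ 2.
Definition norm5 (R : realType) (a b c d e : R[i]) : R :=
  Num.sqrt (sqmod a + sqmod b + sqmod c + sqmod d + sqmod e).

Definition x0s (R : realType) : R[i] := (7%:R)%:C.
Definition x1s (R : realType) : R[i] := (6%:R * Num.sqrt 15%:R / 5%:R)%:C.
Definition y0s (R : realType) : R[i] := (27%:R / 125%:R)%:C.
Definition y1s (R : realType) : R[i] := (54%:R * Num.sqrt 15%:R / 125%:R)%:C.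
Definition y2s (R : realType) : R[i] := (- (43%:R / 5%:R))%:C.

(* Main.v *)
Require Import Defs.
From HB Require Import structures.
From mathcomp Require Import all_boot all_order all_algebra.
From mathcomp Require Import boolp classical_sets reals.
From mathcomp.real_closed Require Import complex.
From mathcomp Require Import ring lra.
Import Order.TTheory GRing.Theory Num.Theory.
Local Open Scope ring_scope.

Local Open Scope classical_set_scope.
Local Open Scope complex_scope.
Section S.
Variable R : realType.
Local Notation C := R[i].

Definition nm (z : C) : R := Num.sqrt (sqmod z).

Lemma sqmod_ge0 (z : C) : 0 <= sqmod z.
Proof. by rewrite /sqmod addr_ge0 // sqr_ge0. Qed.

Lemma nm_ge0 (z : C) : 0 <= nm z.
Proof. exact: sqrtr_ge0. Qed.

Lemma nm_sq (z : C) : nm z ^+ 2 = sqmod z.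
Proof. by rewrite /nm sqr_sqrtr // sqmod_ge0. Qed.

Lemma nmE (z : C) : `|z| = (nm z)%:C.
Proof. by rewrite normc_def. Qed.

Lemma nmD (x y : C) : nm (x + y) <= nm x + nm y.
Proof. by rewrite -lecR rmorphD /= -!nmE ler_normD. Qed.

Lemma nmM (x y : C) : nm (x * y) = nm x * nm y.
Proof. by apply: complexI; rewrite rmorphM /= -!nmE normrM. Qed.

Lemma nmN (x : C) : nm (- x) = nm x.
Proof. by apply: complexI; rewrite -!nmE normrN. Qed.

Lemma nmX (x : C) n : nm (x ^+ n) = nm x ^+ n.
Proof. by apply: complexI; rewrite rmorphXn /= -!nmE normrX. Qed.

Lemma nmC (c : R) : nm (c%:C) = `|c|.
Proof. by rewrite /nm /sqmod /= expr0n /= addr0 sqrtr_sqr. Qed.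

Lemma nm_nat n : nm (n%:R) = n%:R.
Proof. have -> : (n%:R : C) = (n%:R : R)%:C by rewrite rmorph_nat.
by rewrite nmC ger0_norm. Qed.

Lemma nm1 : nm 1 = 1.
Proof. by have := nm_nat 1. Qed.
Lemma nm0 : nm 0 = 0.
Proof. by have := nm_nat 0. Qed.

Lemma Re_le (z : C) : `|complex.Re z| <= nm z.
Proof.
rewrite /nm /sqmod -(sqrtr_sqr (complex.Re z)) ler_wsqrtr //.
by rewrite lerDl sqr_ge0.
Qed.

Lemma nmD_le (x y : C) X Y : nm x <= X -> nm y <= Y -> nm (x + y) <= X + Y.
Proof. move=> h1 h2; apply: le_trans (nmD x y) _; exact: lerD. Qed.

Lemma nmN_le (x : C) X : nm x <= X -> nm (- x) <= X.
Proof. by rewrite nmN. Qed.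

Lemma nmM_le (x y : C) X Y : nm x <= X -> nm y <= Y -> nm (x * y) <= X * Y.
Proof.
move=> h1 h2; rewrite nmM; apply: le_trans (ler_wpM2r (nm_ge0 _) h1) _.
apply: ler_wpM2l => //; exact: le_trans (nm_ge0 _) h1.
Qed.

Ltac nmb := lazymatch goal with
 | |- is_true (nm (_ + _) <= _) => apply: nmD_le; nmb
 | |- is_true (nm (- _) <= _) => apply: nmN_le; nmb
 | |- is_true (nm (_ * _) <= _) => apply: nmM_le; nmb
 | |- _ => apply: lexx end.

Lemma ReD (x y : C) : complex.Re (x + y) = complex.Re x + complex.Re y.
Proof. by case: x; case: y. Qed.
Lemma ReN (x : C) : complex.Re (- x) = - complex.Re x.
Proof. by case: x. Qed.
Lemma ReMC (c : R) (x : C) : complex.Re (c%:C * x) = c * complex.Re x.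
Proof. by case: x => a b /=; ring. Qed.
Lemma Re_sq (x : C) : complex.Re (x ^+ 2) = complex.Re x ^+ 2 - complex.Im x ^+ 2.
Proof. by case: x => a b; rewrite expr2 /=; ring. Qed.
Lemma Re_nat n : complex.Re (n%:R : C) = n%:R.
Proof. by have -> : (n%:R : C) = (n%:R : R)%:C by rewrite rmorph_nat. Qed.



Fixpoint es (s : seq C) (k : nat) : C :=
  match s with
  | [::] => (k == 0%N)%:R
  | x :: s' => match k with 0%N => 1 | k'.+1 => es s' k + x * es s' k' end
  end.

Definition As (s : seq C) : R := \sum_(x <- s) nm x.

Lemma es0 s : es s 0 = 1.
Proof. by case: s. Qed.

Lemma As_ge0 s : 0 <= As s.
Proof. by rewrite /As; elim: s => [|x s IH]; rewrite ?big_nil ?big_cons // addr_ge0 // nm_ge0. Qed.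

Lemma es1_le s : nm (es s 1) <= As s.
Proof.
elim: s => [|x s IH] /=; first by rewrite /As big_nil nm_nat.
rewrite /As big_cons es0 mulr1 addrC; apply: nmD_le => //.
Qed.

Lemma es_le1 s k : all (fun x => nm x <= 1) s -> nm (es s k) <= 2%:R ^+ size s.
Proof.
elim: s k => [|x s IH] k /=.
  by move=> _; case: k => [|k] /=; rewrite ?nm1 ?nm0 ?ler01 ?exprn_ge0.
case/andP=> hx hs; case: k => [|k]; first by rewrite nm1 exprn_ege1 // ?ler1n //.
rewrite exprS mulr_natl mulr2n; apply: nmD_le; first exact: IH.
by rewrite -[X in _ <= X]mul1r; apply: nmM_le => //; exact: IH.
Qed.

Lemma es_le2 s k : (2 <= k)%N -> all (fun x => nm x <= 1) s ->
  nm (es s k) <= 2%:R ^+ size s * As s ^+ 2.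
Proof.
elim: s k => [|x s IH] k /=.
  by case: k => [|[|k]] // _ _; rewrite nm0 mulr_ge0 // ?exprn_ge0 // As_ge0.
case: k => [|[|k]] // _ /andP[hx hs].
have A0 := As_ge0 s; have n0 := nm_ge0 x.
have hA : As (x :: s) = nm x + As s by rewrite /As big_cons.
have p0 : 1 <= 2%:R ^+ size s :> R by rewrite exprn_ege1 // ler1n.
case: k => [|k].
  apply: le_trans; first by apply: nmD_le; [exact: IH | apply: nmM_le; [exact: lexx | exact: es1_le]].
  rewrite hA (exprS 2%:R); set P := 2%:R ^+ size s; set Q := As s.
  have h1 : 0 <= P * Q ^+ 2 by rewrite mulr_ge0 // ?exprn_ge0 // (le_trans _ p0).
  have h2 : nm x * Q <= P * (nm x * Q) by rewrite ler_peMl // mulr_ge0.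
  have h3 : 0 <= P * (nm x * nm x) by rewrite mulr_ge0 // ?mulr_ge0 // (le_trans _ p0).
  have h4 : 0 <= nm x * Q by rewrite mulr_ge0.
  clearbody P Q. nra.
apply: le_trans; first by apply: nmD_le; [exact: IH | apply: nmM_le; [exact: hx | exact: IH]].
rewrite hA (exprS 2%:R); set P := 2%:R ^+ size s; set Q := As s.
have h1 : 0 <= P * Q^+2 by rewrite mulr_ge0 // ?exprn_ge0 // (le_trans _ p0).
have h2 : nm x * (P * Q^+2) <= P * Q ^+ 2 by rewrite ler_piMl.
have h3 : 0 <= P * (nm x * (2%:R * Q + nm x)) by rewrite mulr_ge0 // ?mulr_ge0 // ?addr_ge0 // ?mulr_ge0 // (le_trans _ p0).
nra.
Qed.


Lemma pt_facts (t : C) beta bp : beta <= bp -> 0 <= bp -> 100%:R * nm t <= 1 -> complex.Re t <= beta ->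
  nm t ^+ 2 = complex.Re t ^+ 2 + complex.Im t ^+ 2 /\
      100%:R * complex.Re t ^+ 2 <= `|complex.Re t| /\
      `|complex.Re t| <= 2%:R * bp - complex.Re t /\
      100%:R * nm t ^+ 2 <= nm t /\
      100%:R * nm t ^+ 3 <= nm t ^+ 2 /\ 0 <= nm t.
Proof.
move=> hbp bp0 hn hb; have n0 := nm_ge0 t; have hR := Re_le t.
split; first by rewrite nm_sq.
split.
  have a0 := normr_ge0 (complex.Re t).
  rewrite -real_normK ?num_real // expr2; nra.
split.
  case: (lerP 0 (complex.Re t)) => h; [rewrite ger0_norm // | rewrite ltr0_norm //]; lra.
split; first by rewrite expr2; nra.
split => //. rewrite (exprS _ 2) expr2; have : 0 <= nm t * nm t by rewrite mulr_ge0. nra.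
Qed.

Lemma core (r beta : R) (t1 t2 t3 t4 t5 t6 P1 P2 P3 X : C) :
  r ^+ 2 = 3%:R / 5%:R -> 0 < r ->
  100%:R * nm t1 <= 1 -> 100%:R * nm t2 <= 1 -> 100%:R * nm t3 <= 1 ->
  100%:R * nm t4 <= 1 -> 100%:R * nm t5 <= 1 -> 100%:R * nm t6 <= 1 ->
  complex.Re t1 <= beta -> complex.Re t2 <= beta -> complex.Re t3 <= beta ->
  complex.Re t4 <= beta -> complex.Re t5 <= beta -> complex.Re t6 <= beta ->
  P1 = t1 + t2 + t3 + t4 + t5 + t6 ->
  P2 = t1 ^+ 2 + t2 ^+ 2 + t3 ^+ 2 + t4 ^+ 2 + t5 ^+ 2 + t6 ^+ 2 ->
  P3 = t1 ^+ 3 + t2 ^+ 3 + t3 ^+ 3 + t4 ^+ 3 + t5 ^+ 3 + t6 ^+ 3 ->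
  X = (12%:R * r)%:C * P1 ^+ 2 + 3%:R * P1 * P2 - P1 ^+ 3 ->
  (24%:R)%:C * P1 = X - (12%:R * r)%:C * P2 - (2%:R)%:C * P3 ->
  let T := nm t1 ^+ 2 + nm t2 ^+ 2 + nm t3 ^+ 2 + nm t4 ^+ 2 + nm t5 ^+ 2 + nm t6 ^+ 2 in
  T <= 20%:R * beta /\ nm P1 <= T.
Proof.
move=> hr r0 hn1 hn2 hn3 hn4 hn5 hn6 hb1 hb2 hb3 hb4 hb5 hb6 eP1 eP2 eP3 eX hc T.
have [r1 r2] : 3%:R <= 4%:R * r /\ 5%:R * r <= 4%:R.
  by split; nra.
have [bp [hbp [bp0 hbpv]]] : exists bp, beta <= bp /\ 0 <= bp /\ (bp = beta \/ (bp = 0 /\ beta < 0)).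
  case: (lerP 0 beta) => hb0; first by exists beta; split => //; split => //; left.
  by exists 0; split; [exact: ltW|split => //; right].
have [f11 [f12 [f13 [f14 [f15 f16]]]]] := pt_facts _ _ _ hbp bp0 hn1 hb1.
have [f21 [f22 [f23 [f24 [f25 f26]]]]] := pt_facts _ _ _ hbp bp0 hn2 hb2.
have [f31 [f32 [f33 [f34 [f35 f36]]]]] := pt_facts _ _ _ hbp bp0 hn3 hb3.
have [f41 [f42 [f43 [f44 [f45 f46]]]]] := pt_facts _ _ _ hbp bp0 hn4 hb4.
have [f51 [f52 [f53 [f54 [f55 f56]]]]] := pt_facts _ _ _ hbp bp0 hn5 hb5.
have [f61 [f62 [f63 [f64 [f65 f66]]]]] := pt_facts _ _ _ hbp bp0 hn6 hb6.
have hm : nm P1 <= nm t1 + nm t2 + nm t3 + nm t4 + nm t5 + nm t6 by rewrite eP1; nmb.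
have hp2 : nm P2 <= T.
  by rewrite eP2; apply: le_trans; first nmb; rewrite !nmX.
have hp3 : nm P3 <= nm t1 ^+ 3 + nm t2 ^+ 3 + nm t3 ^+ 3 + nm t4 ^+ 3 + nm t5 ^+ 3 + nm t6 ^+ 3.
  by rewrite eP3; apply: le_trans; first nmb; rewrite !nmX.
have nr : nm (12%:R * r)%:C = 12%:R * r by rewrite nmC ger0_norm // mulr_ge0 // ltW.
have hX : nm X <= 12%:R * r * nm P1 ^+ 2 + 3%:R * nm P1 * nm P2 + nm P1 ^+ 3.
  by rewrite eX; apply: le_trans; first nmb; rewrite nr !nmX nm_nat.
have hc1 : 24%:R * nm P1 <= nm X + 12%:R * r * nm P2 + 2%:R * nm P3.
  have := congr1 nm hc; rewrite nmM nmC ger0_norm // => ->.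
  by apply: le_trans; first nmb; rewrite nr nmC ger0_norm.
have hc2 := congr1 (@complex.Re R) hc.
rewrite ReMC !ReD !ReN !ReMC eP1 eP2 !ReD !Re_sq in hc2.
have hRX := Re_le X; have hR3 := Re_le P3; have hR1 := Re_le P1.
rewrite eP1 !ReD in hR1.
rewrite -eP1 in hm hX hc1 hR1.
set m := nm P1 in hm hX hc1 hR1 *.
set p2 := nm P2 in hp2 hX hc1.
have m0 : 0 <= m by exact: nm_ge0.
have p20 : 0 <= p2 by exact: nm_ge0.
have hT : 10000%:R * T <= 6%:R by rewrite /T; clear -f14 f24 f34 f44 f54 f64 hn1 hn2 hn3 hn4 hn5 hn6; lra.
have eT : T = nm t1 ^+ 2 + nm t2 ^+ 2 + nm t3 ^+ 2 + nm t4 ^+ 2 + nm t5 ^+ 2 + nm t6 ^+ 2 by [].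
have T0 : 0 <= T by rewrite /T !addr_ge0 // exprn_ge0.
clearbody T m p2.
have hp3' : 100%:R * nm P3 <= T by clear -hp3 f15 f25 f35 f45 f55 f65 eT; lra.
have hm6 : 100%:R * m <= 6%:R by clear -hm hn1 hn2 hn3 hn4 hn5 hn6; lra.
have hmm : 100%:R * m ^+ 2 <= 6%:R * m.
  by have := ler_wpM2l m0 hm6; rewrite expr2; clear; lra.
have hrm : r * m ^+ 2 <= 4%:R / 5%:R * m ^+ 2.
  by rewrite ler_wpM2r ?exprn_ge0 // ler_pdivlMr //; clear -r2; lra.
have hmp : 10000%:R * (m * p2) <= 6%:R * m.
  by have := ler_wpM2l m0 (le_trans (ler_wpM2l (ler0n _ 10000) hp2) hT); clear; lra.
have hm3 : 100%:R * m ^+ 3 <= 6%:R * m ^+ 2.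
  by have := ler_wpM2l (exprn_ge0 2 m0) hm6; rewrite (exprS _ 2); clear; lra.
have hrp : r * p2 <= 4%:R / 5%:R * p2 by rewrite ler_wpM2r // ler_pdivlMr //; clear -r2; lra.
have hnX : 1000%:R * nm X <= 582%:R * m by clear -hX hrm hmm hmp hm3 m0 p20; lra.
have hmT : m <= T by clear -hc1 hnX hrp hp2 hp3' m0 p20 T0; lra.
split => //.
set a1 := complex.Re t1 in hc2 hR1 f11 f12 f13 hb1 *.
set a2 := complex.Re t2 in hc2 hR1 f21 f22 f23 hb2 *.
set a3 := complex.Re t3 in hc2 hR1 f31 f32 f33 hb3 *.
set a4 := complex.Re t4 in hc2 hR1 f41 f42 f43 hb4 *.
set a5 := complex.Re t5 in hc2 hR1 f51 f52 f53 hb5 *.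
set a6 := complex.Re t6 in hc2 hR1 f61 f62 f63 hb6 *.
set b1 := complex.Im t1 in hc2 f11 *.
set b2 := complex.Im t2 in hc2 f21 *.
set b3 := complex.Im t3 in hc2 f31 *.
set b4 := complex.Im t4 in hc2 f41 *.
set b5 := complex.Im t5 in hc2 f51 *.
set b6 := complex.Im t6 in hc2 f61 *.
set SA2 := a1 ^+ 2 + a2 ^+ 2 + a3 ^+ 2 + a4 ^+ 2 + a5 ^+ 2 + a6 ^+ 2.
set S := a1 ^+ 2 + b1 ^+ 2 + (a2 ^+ 2 + b2 ^+ 2) + (a3 ^+ 2 + b3 ^+ 2) + (a4 ^+ 2 + b4 ^+ 2) + (a5 ^+ 2 + b5 ^+ 2) + (a6 ^+ 2 + b6 ^+ 2).
have hS : T = S by rewrite eT f11 f21 f31 f41 f51 f61.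
have SA0 : 0 <= SA2 by rewrite /SA2 !addr_ge0 // sqr_ge0.
have S0 : 0 <= S by rewrite /S !addr_ge0 // sqr_ge0.
have hrA : r * SA2 <= 4%:R / 5%:R * SA2 by rewrite ler_wpM2r // ler_pdivlMr //; clear -r2; lra.
have hrS : 3%:R / 4%:R * S <= r * S by rewrite ler_wpM2r // ler_pdivrMr //; clear -r1; lra.
rewrite /SA2 in hrA SA0; rewrite /S in hrS hS S0.
clearbody a1 a2 a3 a4 a5 a6 b1 b2 b3 b4 b5 b6.
have hX1 : - complex.Re X <= nm X by move: hRX; rewrite ler_norml; case/andP => ? ?; lra.
have hP3 : complex.Re P3 <= nm P3 by move: hR3; rewrite ler_norml; case/andP => ? ?; lra.
have hA1 : - (a1 + a2 + a3 + a4 + a5 + a6) <= m by move: hR1; rewrite ler_norml; case/andP => ? ?; lra.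
clear -hc2 hX1 hP3 hA1 hp3' hnX hmT hS hrA hrS SA0 S0 T0 m0 f12 f22 f32 f42 f52 f62 f13 f23 f33 f43 f53 f63 hb1 hb2 hb3 hb4 hb5 hb6 hbpv bp0 hbp.
case: hbpv => [ebp|[ebp bneg]]; rewrite ebp in f13 f23 f33 f43 f53 f63; lra.
Qed.

Lemma vieta6 (a b c d e f : C) :
  let L := [:: a; b; c; d; e; f] in
  \prod_(z <- L) ('X - z%:P) =
  Poly [:: es L 6; - es L 5; es L 4; - es L 3; es L 2; - es L 1; 1].
Proof.
move=> L; rewrite /L !big_cons big_nil /= !cons_poly_def.
rewrite !polyCD !polyCM !polyCN.
ring.
Qed.

Lemma prod_expand (t1 t2 t3 t4 t5 t6 w : C) :
  let L := [:: t1; t2; t3; t4; t5; t6] in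
  (w - t1) * (w - t2) * (w - t3) * (w - t4) * (w - t5) * (w - t6) =
  w ^+ 6 - es L 1 * w ^+ 5 + es L 2 * w ^+ 4 - es L 3 * w ^+ 3 + es L 4 * w ^+ 2
  - es L 5 * w + es L 6.
Proof. by move=> L; rewrite /L /=; ring. Qed.

Lemma mul_le_l (x y : R) : 0 <= x -> y <= 1 -> x * y <= x.
Proof. by move=> x0 y1; rewrite -[X in _ <= X]mulr1 ler_wpM2l. Qed.

Lemma root_bound (t1 t2 t3 t4 t5 t6 w : C) :
  let L := [:: t1; t2; t3; t4; t5; t6] in
  (w - t1) * (w - t2) * (w - t3) * (w - t4) * (w - t5) * (w - t6) = 0 ->
  100%:R ^+ 6 * (nm (es L 1) + nm (es L 2) + nm (es L 3) + nm (es L 4)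
    + nm (es L 5) + nm (es L 6)) <= 1 ->
  100%:R * nm w <= 1.
Proof.
move=> L; rewrite prod_expand -/L => h0 hE.
have hw : w ^+ 6 = es L 1 * w ^+ 5 - es L 2 * w ^+ 4 + es L 3 * w ^+ 3 - es L 4 * w ^+ 2
  + es L 5 * w - es L 6.
  by apply/eqP; rewrite -subr_eq0 -h0; apply/eqP; ring.
have hn : nm w ^+ 6 <= nm (es L 1) * nm w ^+ 5 + nm (es L 2) * nm w ^+ 4
   + nm (es L 3) * nm w ^+ 3 + nm (es L 4) * nm w ^+ 2 + nm (es L 5) * nm w + nm (es L 6).
  by rewrite -nmX hw; apply: le_trans; first nmb; rewrite !nmX.
move: hE hn; set E1 := nm (es L 1); set E2 := nm (es L 2); set E3 := nm (es L 3).
set E4 := nm (es L 4); set E5 := nm (es L 5); set E6 := nm (es L 6).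
have e1 : 0 <= E1 := nm_ge0 _. have e2 : 0 <= E2 := nm_ge0 _.
have e3 : 0 <= E3 := nm_ge0 _. have e4 : 0 <= E4 := nm_ge0 _.
have e5 : 0 <= E5 := nm_ge0 _. have e6 : 0 <= E6 := nm_ge0 _.
have n0 : 0 <= nm w := nm_ge0 _.
clearbody E1 E2 E3 E4 E5 E6; set n := nm w in n0 *; clearbody n => hE hn.
case: (lerP n 1) => hn1.
  have x1 : n ^+ 5 <= 1 by rewrite exprn_ile1.
  have x2 : n ^+ 4 <= 1 by rewrite exprn_ile1.
  have x3 : n ^+ 3 <= 1 by rewrite exprn_ile1.
  have x4 : n ^+ 2 <= 1 by rewrite exprn_ile1.
  have := mul_le_l _ _ e1 x1; have := mul_le_l _ _ e2 x2; have := mul_le_l _ _ e3 x3.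
  have := mul_le_l _ _ e4 x4; have := mul_le_l _ _ e5 hn1 => y5 y4 y3 y2 y1.
  have h6 : n ^+ 6 <= E1 + E2 + E3 + E4 + E5 + E6 by lra.
  have c0 : 0 <= 100%:R ^+ 6 :> R by rewrite exprn_ge0.
  have h7 := ler_wpM2l c0 h6.
  rewrite leNgt; apply/negP => hc.
  have : 1 < (100%:R * n) ^+ 6 by rewrite exprn_egt1.
  rewrite exprMn; move: hc h7 hE; set c := 100%:R ^+ 6; clearbody c => q1 q2 q3 q4; suff : (1 : R) < 1 by rewrite ltxx. lra.
have p5 : 0 < n ^+ 5 by rewrite exprn_gt0 // (lt_trans ltr01).
have z1 : n ^+ 4 <= n ^+ 5 by rewrite ler_eXn2l.
have z2 : n ^+ 3 <= n ^+ 5 by rewrite ler_eXn2l.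
have z3 : n ^+ 2 <= n ^+ 5 by rewrite ler_eXn2l.
have z4 : n <= n ^+ 5 by rewrite -{1}(expr1 n) ler_eXn2l.
have z5 : 1 <= n ^+ 5 by rewrite exprn_ege1 // ltW.
have := ler_wpM2l e2 z1; have := ler_wpM2l e3 z2; have := ler_wpM2l e4 z3.
have := ler_wpM2l e5 z4; have := ler_wpM2l e6 z5 => y5 y4 y3 y2 y1.
have hp : 0 < n ^+ 5 * (n - (E1 + E2 + E3 + E4 + E5 + E6)).
  rewrite mulr_gt0 // subr_gt0.
  have : 0 <= 100%:R ^+ 6 - 1 :> R by rewrite subr_ge0 exprn_ege1 // ler1n.
  move: hE; set c := 100%:R ^+ 6; clearbody c => hE hc; nra.
rewrite (exprS n 5) in hn; lra.
Qed.

Definition r : R := Num.sqrt 15%:R / 5%:R.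
Local Notation rc := (r%:C).

Lemma s15 : Num.sqrt 15%:R = 5%:R * r :> R.
Proof. by rewrite /r; field. Qed.

Lemma r_gt0 : 0 < r.
Proof. by rewrite /r divr_gt0 // sqrtr_gt0 ltr0n. Qed.

Lemma r2 : r ^+ 2 = 3%:R / 5%:R.
Proof.
have h : Num.sqrt 15%:R ^+ 2 = 15%:R :> R by rewrite sqr_sqrtr // ler0n.
by rewrite /r expr_div_n h; field.
Qed.

Lemma r_le1 : r <= 1.
Proof. have := r2; have := r_gt0; nra. Qed.

Lemma rcX n : rc ^+ n = (r ^+ n)%:C.
Proof. by rewrite rmorphXn. Qed.

Lemma natC n : (n%:R : R)%:C = n%:R.
Proof. by rewrite rmorph_nat. Qed.

Lemma x0sE : x0s R = 7%:R.
Proof. by rewrite /x0s natC. Qed.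

Lemma x1sE : x1s R = 6%:R * rc.
Proof. by rewrite /x1s s15 -natC -rmorphM; congr (_%:C); by field. Qed.

Lemma r4 : r ^+ 4 = 9%:R / 25%:R.
Proof. by rewrite (_ : 4%N = 2 * 2)%N // exprM r2; field. Qed.

Lemma y0sE : y0s R = rc ^+ 6.
Proof.
rewrite /y0s rcX (_ : 6%N = 2 * 3)%N // exprM r2; congr (_%:C); by field.
Qed.

Lemma y1sE : y1s R = 6%:R * rc ^+ 5.
Proof.
rewrite /y1s rcX s15 -natC -rmorphM exprS r4; congr (_%:C); by field.
Qed.

Lemma y2sE : y2s R = 15%:R * rc ^+ 4 - 14%:R.
Proof.
rewrite /y2s rcX r4 -!natC -rmorphM -rmorphB; congr (_%:C); by field.
Qed.

Lemma rc2 : rc ^+ 2 = 3%:R / 5%:R.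
Proof. by rewrite rcX r2 rmorphM /= fmorphV /= !natC. Qed.

Lemma nm_rc : nm rc = r.
Proof. by rewrite nmC ger0_norm // ltW // r_gt0. Qed.

Lemma pxy_Poly (x0 x1 y0 y1 y2 : C) :
  pxy x0 x1 y0 y1 y2 = Poly [:: y0; y1; 2%:R * x0 + y2; 2%:R * x1; x0 + 2%:R; x1; 1].
Proof.
rewrite /pxy /= !cons_poly_def -!mul_polyC !polyCD !polyCM ?polyC_natr.
ring.
Qed.

Lemma Poly_inj (sp sv : seq C) : last 0 sp != 0 -> last 0 sv != 0 ->
  Poly sp = Poly sv -> sp = sv.
Proof. by move=> h1 h2 h; rewrite -(PolyK h1) -(PolyK h2) h. Qed.

Lemma factor6 (p : {poly C}) (sp : seq C) : p = Poly sp -> size sp = 7%N ->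
  last 0 sp = 1 ->
  exists s1 s2 s3 s4 s5 s6, p = \prod_(z <- [:: s1; s2; s3; s4; s5; s6]) ('X - z%:P).
Proof.
move=> hp hsz hl.
have [rs Hrs] := closed_field_poly_normal p.
have hs : polyseq p = sp by rewrite hp; apply: (@PolyK _ 0); rewrite hl oner_neq0.
have lc : lead_coef p = 1 by rewrite lead_coefE hs nth_last.
rewrite lc scale1r in Hrs.
have : size p = (size rs).+1 by rewrite {1}Hrs size_prod_XsubC.
rewrite hs hsz.
case: rs Hrs => [|s1 [|s2 [|s3 [|s4 [|s5 [|s6 [|? ?]]]]]]] //= Hrs _.
by exists s1, s2, s3, s4, s5, s6.
Qed.

Lemma abscissa_ub (p : {poly C}) (L : seq C) :
  p = \prod_(z <- L) ('X - z%:P) ->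
  forall z, z \in L -> complex.Re z <= abscissa p.
Proof.
move=> hp z zL; rewrite /abscissa.
apply: ub_le_sup; last first.
  by exists z => //; rewrite /= hp root_prod_XsubC.
exists (\sum_(w <- L) `|complex.Re w|) => y [w /= + <-].
rewrite hp root_prod_XsubC => wL.
rewrite (big_rem w wL) /=; apply: le_trans (ler_norm _) _.
by rewrite lerDl sumr_ge0.
Qed.

Lemma abscissa_star : abscissa (pxy (x0s R) (x1s R) (y0s R) (y1s R) (y2s R)) = - r.
Proof.
pose L : seq C := [:: - rc; - rc; - rc; - rc; - rc; - rc].
have hp : pxy (x0s R) (x1s R) (y0s R) (y1s R) (y2s R) = \prod_(z <- L) ('X - z%:P).
  rewrite pxy_Poly vieta6; congr Poly.
  rewrite x0sE x1sE y0sE y1sE y2sE /=.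
  have e3 : rc ^+ 3 = rc * rc ^+ 2 by rewrite exprS.
  congr [:: _; _; _; _; _; _; _]; try ring.
    by apply: (@etrans _ _ (20%:R * rc * rc ^+ 2)); [rewrite rc2; field | ring].
  by apply: (@etrans _ _ (15%:R * rc ^+ 2)); [rewrite rc2; field | ring].
rewrite /abscissa.
have -> : [set complex.Re z | z in [set z : C | root (pxy (x0s R) (x1s R) (y0s R) (y1s R) (y2s R)) z]]
    = [set - r].
  rewrite hp; apply/seteqP; split => y /=.
    case=> w /=; rewrite root_prod_XsubC /L !inE !orbb => /eqP -> <-.
    by [].
  move=> ->; exists (- rc) => //; by rewrite /= root_prod_XsubC /L !inE eqxx.
exact: sup1.
Qed.

Lemma fwd_id (s1 s2 s3 s4 s5 s6 c D1 D2 D3 D4 D5 D6 : C) :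
  let L := [:: s1; s2; s3; s4; s5; s6] in
  let Lt := [:: s1 + c; s2 + c; s3 + c; s4 + c; s5 + c; s6 + c] in
  D1 = es L 1 + 6%:R * c -> D2 = es L 2 - 15%:R * c ^+ 2 ->
  D3 = es L 3 + 20%:R * c ^+ 3 -> D4 = es L 4 - 15%:R * c ^+ 4 ->
  D5 = es L 5 + 6%:R * c ^+ 5 -> D6 = es L 6 - c ^+ 6 ->
  [/\ es Lt 1 = D1, es Lt 2 = 5%:R * c * D1 + D2,
      es Lt 3 = 10%:R * c ^+ 2 * D1 + 4%:R * c * D2 + D3,
      es Lt 4 = 10%:R * c ^+ 3 * D1 + 6%:R * c ^+ 2 * D2 + 3%:R * c * D3 + D4 &
      es Lt 5 = 5%:R * c ^+ 4 * D1 + 4%:R * c ^+ 3 * D2 + 3%:R * c ^+ 2 * D3 + 2%:R * c * D4 + D5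
   /\ es Lt 6 = c ^+ 5 * D1 + c ^+ 4 * D2 + c ^+ 3 * D3 + c ^+ 2 * D4 + c * D5 + D6].
Proof.
move=> L Lt -> -> -> -> -> ->; rewrite /L /Lt /=.
split; [ring|ring|ring|ring|split; ring].
Qed.

Lemma bwd_id (s1 s2 s3 s4 s5 s6 c : C) :
  let L := [:: s1; s2; s3; s4; s5; s6] in
  let Lt := [:: s1 + c; s2 + c; s3 + c; s4 + c; s5 + c; s6 + c] in
  [/\ es L 1 + 6%:R * c = es Lt 1,
      es L 2 - 15%:R * c ^+ 2 = es Lt 2 - 5%:R * c * es Lt 1,
      es L 4 - 15%:R * c ^+ 4 = es Lt 4 - 3%:R * c * es Lt 3 + 6%:R * c ^+ 2 * es Lt 2
                                 - 10%:R * c ^+ 3 * es Lt 1,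
      es L 5 + 6%:R * c ^+ 5 = es Lt 5 - 2%:R * c * es Lt 4 + 3%:R * c ^+ 2 * es Lt 3
                                - 4%:R * c ^+ 3 * es Lt 2 + 5%:R * c ^+ 4 * es Lt 1 &
      es L 6 - c ^+ 6 = es Lt 6 - c * es Lt 5 + c ^+ 2 * es Lt 4 - c ^+ 3 * es Lt 3
                         + c ^+ 4 * es Lt 2 - c ^+ 5 * es Lt 1].
Proof.
move=> L Lt; rewrite /L /Lt /=.
split; ring.
Qed.

Lemma constr_id (s1 s2 s3 s4 s5 s6 c : C) :
  let L := [:: s1; s2; s3; s4; s5; s6] in
  let t1 := s1 + c in let t2 := s2 + c in let t3 := s3 + c in
  let t4 := s4 + c in let t5 := s5 + c in let t6 := s6 + c in
  let P1 := t1 + t2 + t3 + t4 + t5 + t6 in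
  let P2 := t1 ^+ 2 + t2 ^+ 2 + t3 ^+ 2 + t4 ^+ 2 + t5 ^+ 2 + t6 ^+ 2 in
  let P3 := t1 ^+ 3 + t2 ^+ 3 + t3 ^+ 3 + t4 ^+ 3 + t5 ^+ 3 + t6 ^+ 3 in
  6%:R * (es L 3 - 2%:R * es L 1) - (10%:R * c ^+ 2 - 6%:R) * (6%:R * P1 - 12%:R * c) =
  24%:R * P1 + 12%:R * c * P2 + 2%:R * P3 - 12%:R * c * P1 ^+ 2 - 3%:R * P1 * P2 + P1 ^+ 3.
Proof.
move=> L t1 t2 t3 t4 t5 t6 P1 P2 P3; rewrite /L /P1 /P2 /P3 /t1 /t2 /t3 /t4 /t5 /t6 /=.
ring.
Qed.

Lemma es1_6 (a b c d e f : C) : es [:: a; b; c; d; e; f] 1 = a + b + c + d + e + f.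
Proof. by rewrite /=; ring. Qed.

Lemma cs6 (a1 a2 a3 a4 a5 a6 : R) :
  (a1 + a2 + a3 + a4 + a5 + a6) ^+ 2 <=
  6%:R * (a1 ^+ 2 + a2 ^+ 2 + a3 ^+ 2 + a4 ^+ 2 + a5 ^+ 2 + a6 ^+ 2).
Proof.
have := sqr_ge0 (a1 - a2).
have := sqr_ge0 (a1 - a3).
have := sqr_ge0 (a1 - a4).
have := sqr_ge0 (a1 - a5).
have := sqr_ge0 (a1 - a6).
have := sqr_ge0 (a2 - a3).
have := sqr_ge0 (a2 - a4).
have := sqr_ge0 (a2 - a5).
have := sqr_ge0 (a2 - a6).
have := sqr_ge0 (a3 - a4).
have := sqr_ge0 (a3 - a5).
have := sqr_ge0 (a3 - a6).
have := sqr_ge0 (a4 - a5).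
have := sqr_ge0 (a4 - a6).
have := sqr_ge0 (a5 - a6).
rewrite !expr2; lra.
Qed.

Arguments es : simpl never.

Definition eps0 : R := (200%:R * 100%:R ^+ 6)^-1.
Definition tau0 : R := (200%:R * 10000%:R)^-1.

Ltac nmb2 := lazymatch goal with
 | |- is_true (nm (_ + _) <= _) => apply: nmD_le; nmb2
 | |- is_true (nm (- _) <= _) => apply: nmN_le; nmb2
 | |- is_true (nm (_ * _) <= _) => apply: nmM_le; nmb2
 | |- _ => first [eassumption | apply: lexx] end.

Lemma norm5_ge (a b c d e : C) :
  [/\ nm a <= norm5 a b c d e, nm b <= norm5 a b c d e, nm c <= norm5 a b c d e,
      nm d <= norm5 a b c d e & nm e <= norm5 a b c d e].
Proof.
rewrite /norm5 /nm.
have := sqmod_ge0 a; have := sqmod_ge0 b; have := sqmod_ge0 c.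
have := sqmod_ge0 d; have := sqmod_ge0 e => *.
by split; apply: ler_wsqrtr; lra.
Qed.

Lemma nm_sqr_le (a b : R) : 0 <= a -> a <= b -> a ^+ 2 <= b ^+ 2.
Proof. by move=> a0 ab; rewrite !expr2 ler_pM. Qed.

Lemma main_ineq (x0 x1 y0 y1 y2 : C) :
  norm5 (x0 - x0s R) (x1 - x1s R) (y0 - y0s R) (y1 - y1s R) (y2 - y2s R) < eps0 ->
  abscissa (pxy (x0s R) (x1s R) (y0s R) (y1s R) (y2s R))
    + tau0 * norm5 (x0 - x0s R) (x1 - x1s R) (y0 - y0s R) (y1 - y1s R) (y2 - y2s R)
    <= abscissa (pxy x0 x1 y0 y1 y2).
Proof.
rewrite abscissa_star.
set d1 := x0 - x0s R; set d2 := x1 - x1s R; set d3 := y0 - y0s R.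
set d4 := y1 - y1s R; set d5 := y2 - y2s R.
have [hd1 hd2 hd3 hd4 hd5] := norm5_ge d1 d2 d3 d4 d5.
set N5 := norm5 d1 d2 d3 d4 d5 in hd1 hd2 hd3 hd4 hd5 * => hN.
have N0 : 0 <= N5 := sqrtr_ge0 _.
have [s1 [s2 [s3 [s4 [s5 [s6 hp]]]]]] := factor6 _ _ (pxy_Poly x0 x1 y0 y1 y2) erefl erefl.
set L := [:: s1; s2; s3; s4; s5; s6] in hp.
have hv : \prod_(z <- L) ('X - z%:P) =
  Poly [:: es L 6; - es L 5; es L 4; - es L 3; es L 2; - es L 1; 1] := vieta6 s1 s2 s3 s4 s5 s6.
have hseq : [:: y0; y1; 2%:R * x0 + y2; 2%:R * x1; x0 + 2%:R; x1; 1] =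
    [:: es L 6; - es L 5; es L 4; - es L 3; es L 2; - es L 1; 1].
  apply: Poly_inj; [by rewrite /= oner_neq0 | by rewrite /= oner_neq0 |].
  by rewrite -pxy_Poly hp hv.
case: hseq => ey0 ey1 ey2 ey3 ey4 ey5.
pose D1 := es L 1 + 6%:R * rc. pose D2 := es L 2 - 15%:R * rc ^+ 2.
pose D3 := es L 3 + 20%:R * rc ^+ 3. pose D4 := es L 4 - 15%:R * rc ^+ 4.
pose D5 := es L 5 + 6%:R * rc ^+ 5. pose D6 := es L 6 - rc ^+ 6.
have e3 : rc ^+ 3 = rc * rc ^+ 2 by rewrite exprS.
have hD1 : D1 = - d2 by rewrite /D1 /d2 x1sE ey5; ring.
have hD2 : D2 = d1 by rewrite /D2 /d1 x0sE -ey4 rc2; field.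
have E3 : es L 3 = - (2%:R * x1) by rewrite ey3 opprK.
have E5 : es L 5 = - y1 by rewrite ey1 opprK.
have hD3 : D3 = - (2%:R * d2) by rewrite /D3 /d2 x1sE E3 e3 rc2; field.
have hD4 : D4 = 2%:R * d1 + d5 by rewrite /D4 -ey2 /d1 /d5 x0sE y2sE; ring.
have hD5 : D5 = - d4 by rewrite /D5 E5 /d4 y1sE; ring.
have hD6 : D6 = d3 by rewrite /D6 -ey0 /d3 y0sE; ring.
have hc3 : es L 3 = 2%:R * es L 1.
  by rewrite E3 ey5; ring.
have [f1 f2 f3 f4 [f5 f6]] := fwd_id s1 s2 s3 s4 s5 s6 rc D1 D2 D3 D4 D5 D6
   erefl erefl erefl erefl erefl erefl.
have [g1 g2 g4 g5 g6] := bwd_id s1 s2 s3 s4 s5 s6 rc.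
rewrite -/D1 -/D2 -/D4 -/D5 -/D6 in g1 g2 g4 g5 g6.
clearbody D1 D2 D3 D4 D5 D6.
set Lt := [:: s1 + rc; s2 + rc; s3 + rc; s4 + rc; s5 + rc; s6 + rc] in f1 f2 f3 f4 f5 f6 g1 g2 g4 g5 g6.
have nr1 : nm rc <= 1 by rewrite nm_rc r_le1.
have nrX : forall j, nm (rc ^+ j) <= 1 by move=> j; rewrite nmX nm_rc exprn_ile1 // ?r_le1 // ltW // r_gt0.
have nr2 := nrX 2%N; have nr3 := nrX 3%N; have nr4 := nrX 4%N; have nr5 := nrX 5%N.
have hB1 : nm D1 <= 3%:R * N5 by rewrite hD1 nmN; lra.
have hB2 : nm D2 <= 3%:R * N5 by rewrite hD2; lra.
have hB3 : nm D3 <= 3%:R * N5 by rewrite hD3 nmN nmM nm_nat; lra.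
have hB4 : nm D4 <= 3%:R * N5.
  by rewrite hD4; apply: le_trans (nmD _ _) _; rewrite nmM nm_nat; lra.
have hB5 : nm D5 <= 3%:R * N5 by rewrite hD5 nmN; lra.
have hB6 : nm D6 <= 3%:R * N5 by rewrite hD6; lra.
have hE1 : nm (es Lt 1) <= 3%:R * N5 by rewrite f1.
have hE2 : nm (es Lt 2) <= 18%:R * N5.
  by rewrite f2; apply: le_trans; first nmb2; rewrite !nm_nat; lra.
have hE3 : nm (es Lt 3) <= 45%:R * N5.
  by rewrite f3; apply: le_trans; first nmb2; rewrite !nm_nat; lra.
have hE4 : nm (es Lt 4) <= 60%:R * N5.
  by rewrite f4; apply: le_trans; first nmb2; rewrite !nm_nat; lra.
have hE5 : nm (es Lt 5) <= 45%:R * N5.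
  by rewrite f5; apply: le_trans; first nmb2; rewrite !nm_nat; lra.
have hE6 : nm (es Lt 6) <= 18%:R * N5.
  by rewrite f6; apply: le_trans; first nmb2; lra.
have hsum : 100%:R ^+ 6 * (nm (es Lt 1) + nm (es Lt 2) + nm (es Lt 3) + nm (es Lt 4)
    + nm (es Lt 5) + nm (es Lt 6)) <= 1.
  have a0 : 0 < 200%:R * 100%:R ^+ 6 :> R by rewrite mulr_gt0 // exprn_gt0.
  move: hN; rewrite /eps0 -[X in _ < X]mul1r ltr_pdivlMr // => hN.
  have c0 : 0 <= 100%:R ^+ 6 :> R by rewrite exprn_ge0.
  have hS : nm (es Lt 1) + nm (es Lt 2) + nm (es Lt 3) + nm (es Lt 4)
    + nm (es Lt 5) + nm (es Lt 6) <= 189%:R * N5 by lra.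
  have h1 := ler_wpM2l c0 hS.
  apply: le_trans h1 _.
  move: hN c0; set c := 100%:R ^+ 6; clearbody c => hN c0.
  have : 0 <= c * N5 by exact: mulr_ge0.
  lra.
have z0 : forall w : C, (w - w) = 0 by move=> w; rewrite subrr.
have hn1 : 100%:R * nm (s1 + rc) <= 1.
  apply: (root_bound (s1 + rc) (s2 + rc) (s3 + rc) (s4 + rc) (s5 + rc) (s6 + rc) (s1 + rc) _ hsum).
  by rewrite !z0 !(mulr0, mul0r).
have hn2 : 100%:R * nm (s2 + rc) <= 1.
  apply: (root_bound (s1 + rc) (s2 + rc) (s3 + rc) (s4 + rc) (s5 + rc) (s6 + rc) (s2 + rc) _ hsum).
  by rewrite !z0 !(mulr0, mul0r).
have hn3 : 100%:R * nm (s3 + rc) <= 1.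
  apply: (root_bound (s1 + rc) (s2 + rc) (s3 + rc) (s4 + rc) (s5 + rc) (s6 + rc) (s3 + rc) _ hsum).
  by rewrite !z0 !(mulr0, mul0r).
have hn4 : 100%:R * nm (s4 + rc) <= 1.
  apply: (root_bound (s1 + rc) (s2 + rc) (s3 + rc) (s4 + rc) (s5 + rc) (s6 + rc) (s4 + rc) _ hsum).
  by rewrite !z0 !(mulr0, mul0r).
have hn5 : 100%:R * nm (s5 + rc) <= 1.
  apply: (root_bound (s1 + rc) (s2 + rc) (s3 + rc) (s4 + rc) (s5 + rc) (s6 + rc) (s5 + rc) _ hsum).
  by rewrite !z0 !(mulr0, mul0r).
have hn6 : 100%:R * nm (s6 + rc) <= 1.
  apply: (root_bound (s1 + rc) (s2 + rc) (s3 + rc) (s4 + rc) (s5 + rc) (s6 + rc) (s6 + rc) _ hsum).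
  by rewrite !z0 !(mulr0, mul0r).
pose beta := abscissa (pxy x0 x1 y0 y1 y2) + r.
have hab : forall z, z \in L -> complex.Re (z + rc) <= beta.
  by move=> z zL; rewrite ReD /= lerD2r; exact: abscissa_ub _ _ hp z zL.
have hb1 : complex.Re (s1 + rc) <= beta by apply: hab; rewrite !inE eqxx ?orbT.
have hb2 : complex.Re (s2 + rc) <= beta by apply: hab; rewrite !inE eqxx ?orbT.
have hb3 : complex.Re (s3 + rc) <= beta by apply: hab; rewrite !inE eqxx ?orbT.
have hb4 : complex.Re (s4 + rc) <= beta by apply: hab; rewrite !inE eqxx ?orbT.
have hb5 : complex.Re (s5 + rc) <= beta by apply: hab; rewrite !inE eqxx ?orbT.
have hb6 : complex.Re (s6 + rc) <= beta by apply: hab; rewrite !inE eqxx ?orbT.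
have key := constr_id s1 s2 s3 s4 s5 s6 rc; cbv zeta in key.
have z10 : 10%:R * rc ^+ 2 - 6%:R = 0 by rewrite rc2; field.
have hcon : (24%:R)%:C * ((s1 + rc) + (s2 + rc) + (s3 + rc) + (s4 + rc) + (s5 + rc) + (s6 + rc)) = ((12%:R * r)%:C * ((s1 + rc) + (s2 + rc) + (s3 + rc) + (s4 + rc) + (s5 + rc) + (s6 + rc)) ^+ 2 + 3%:R * ((s1 + rc) + (s2 + rc) + (s3 + rc) + (s4 + rc) + (s5 + rc) + (s6 + rc)) * ((s1 + rc) ^+ 2 + (s2 + rc) ^+ 2 + (s3 + rc) ^+ 2 + (s4 + rc) ^+ 2 + (s5 + rc) ^+ 2 + (s6 + rc) ^+ 2) - ((s1 + rc) + (s2 + rc) + (s3 + rc) + (s4 + rc) + (s5 + rc) + (s6 + rc)) ^+ 3) - (12%:R * r)%:C * ((s1 + rc) ^+ 2 + (s2 + rc) ^+ 2 + (s3 + rc) ^+ 2 + (s4 + rc) ^+ 2 + (s5 + rc) ^+ 2 + (s6 + rc) ^+ 2) - (2%:R)%:C * ((s1 + rc) ^+ 3 + (s2 + rc) ^+ 3 + (s3 + rc) ^+ 3 + (s4 + rc) ^+ 3 + (s5 + rc) ^+ 3 + (s6 + rc) ^+ 3).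
  apply/eqP; rewrite -subr_eq0; apply/eqP.
  apply: (@etrans _ _ (6%:R * (es L 3 - 2%:R * es L 1) - (10%:R * rc ^+ 2 - 6%:R) * (6%:R * ((s1 + rc) + (s2 + rc) + (s3 + rc) + (s4 + rc) + (s5 + rc) + (s6 + rc)) - 12%:R * rc))).
    rewrite key !rmorphM /= !natC; ring.
  by rewrite hc3 z10; ring.
have hcore := core r beta (s1 + rc) (s2 + rc) (s3 + rc) (s4 + rc) (s5 + rc) (s6 + rc) ((s1 + rc) + (s2 + rc) + (s3 + rc) + (s4 + rc) + (s5 + rc) + (s6 + rc)) ((s1 + rc) ^+ 2 + (s2 + rc) ^+ 2 + (s3 + rc) ^+ 2 + (s4 + rc) ^+ 2 + (s5 + rc) ^+ 2 + (s6 + rc) ^+ 2) ((s1 + rc) ^+ 3 + (s2 + rc) ^+ 3 + (s3 + rc) ^+ 3 + (s4 + rc) ^+ 3 + (s5 + rc) ^+ 3 + (s6 + rc) ^+ 3) ((12%:R * r)%:C * ((s1 + rc) + (s2 + rc) + (s3 + rc) + (s4 + rc) + (s5 + rc) + (s6 + rc)) ^+ 2 + 3%:R * ((s1 + rc) + (s2 + rc) + (s3 + rc) + (s4 + rc) + (s5 + rc) + (s6 + rc)) * ((s1 + rc) ^+ 2 + (s2 + rc) ^+ 2 + (s3 + rc) ^+ 2 + (s4 + rc) ^+ 2 + (s5 + rc) ^+ 2 + (s6 + rc) ^+ 2) - ((s1 + rc) + (s2 + rc) + (s3 + rc) + (s4 + rc) + (s5 + rc) + (s6 + rc)) ^+ 3)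 r2 r_gt0
  hn1 hn2 hn3 hn4 hn5 hn6 hb1 hb2 hb3 hb4 hb5 hb6 erefl erefl erefl erefl hcon.
cbv zeta in hcore; case: hcore => hT hmT.
set T := nm (s1 + rc) ^+ 2 + nm (s2 + rc) ^+ 2 + nm (s3 + rc) ^+ 2 + nm (s4 + rc) ^+ 2 + nm (s5 + rc) ^+ 2 + nm (s6 + rc) ^+ 2 in hT hmT.
have T0 : 0 <= T by rewrite /T !addr_ge0 // exprn_ge0 // nm_ge0.
have l1 : nm (s1 + rc) <= 1 by have := nm_ge0 (s1 + rc); clear -hn1; lra.
have l2 : nm (s2 + rc) <= 1 by have := nm_ge0 (s2 + rc); clear -hn2; lra.
have l3 : nm (s3 + rc) <= 1 by have := nm_ge0 (s3 + rc); clear -hn3; lra.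
have l4 : nm (s4 + rc) <= 1 by have := nm_ge0 (s4 + rc); clear -hn4; lra.
have l5 : nm (s5 + rc) <= 1 by have := nm_ge0 (s5 + rc); clear -hn5; lra.
have l6 : nm (s6 + rc) <= 1 by have := nm_ge0 (s6 + rc); clear -hn6; lra.
have hall : all (fun x => nm x <= 1) Lt by rewrite /Lt /= l1 l2 l3 l4 l5 l6.
have hAs : 2%:R ^+ size Lt * As Lt ^+ 2 <= 384%:R * T.
  have e64 : 2%:R ^+ size Lt = 64%:R :> R by rewrite /Lt /= -natrX.
  rewrite e64 /As /Lt !big_cons big_nil addr0.
  have := cs6 (nm (s1 + rc)) (nm (s2 + rc)) (nm (s3 + rc)) (nm (s4 + rc)) (nm (s5 + rc)) (nm (s6 + rc)).
  rewrite /T; clear; lra.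
have G2 : nm (es Lt 2) <= 384%:R * T := le_trans (es_le2 Lt 2 isT hall) hAs.
have G3 : nm (es Lt 3) <= 384%:R * T := le_trans (es_le2 Lt 3 isT hall) hAs.
have G4 : nm (es Lt 4) <= 384%:R * T := le_trans (es_le2 Lt 4 isT hall) hAs.
have G5 : nm (es Lt 5) <= 384%:R * T := le_trans (es_le2 Lt 5 isT hall) hAs.
have G6 : nm (es Lt 6) <= 384%:R * T := le_trans (es_le2 Lt 6 isT hall) hAs.
have G1 : nm (es Lt 1) <= 384%:R * T by rewrite /Lt es1_6; clear -hmT T0; lra.
have K1 : nm D1 <= 384%:R * T by rewrite g1.
have K2 : nm D2 <= 6%:R * (384%:R * T).
  by rewrite g2; apply: le_trans; first nmb2; rewrite !nm_nat; clear -G1 G2 T0; lra.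
have K4 : nm D4 <= 20%:R * (384%:R * T).
  by rewrite g4; apply: le_trans; first nmb2; rewrite !nm_nat; clear -G1 G2 G3 G4 T0; lra.
have K5 : nm D5 <= 15%:R * (384%:R * T).
  by rewrite g5; apply: le_trans; first nmb2; rewrite !nm_nat; clear -G1 G2 G3 G4 G5 T0; lra.
have K6 : nm D6 <= 6%:R * (384%:R * T).
  by rewrite g6; apply: le_trans; first nmb2; clear -G1 G2 G3 G4 G5 G6 T0; lra.
have nd1 : nm d1 <= 2%:R * 10000%:R * T by rewrite -hD2; clear -K2 T0; lra.
have nd2 : nm d2 <= 2%:R * 10000%:R * T by rewrite -nmN -hD1; clear -K1 T0; lra.
have nd3 : nm d3 <= 2%:R * 10000%:R * T by rewrite -hD6; clear -K6 T0; lra.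
have nd4 : nm d4 <= 2%:R * 10000%:R * T by rewrite -nmN -hD5; clear -K5 T0; lra.
have nd5 : nm d5 <= 2%:R * 10000%:R * T.
  have -> : d5 = D4 - 2%:R * D2 by rewrite hD4 hD2; ring.
  apply: le_trans; first nmb2; rewrite nm_nat; clear -K2 K4 T0; lra.
have hN5 : N5 <= 10%:R * 10000%:R * T.
  rewrite /N5 /norm5 -(ger0_norm (_ : 0 <= 10%:R * 10000%:R * T)); last first.
    by rewrite !mulr_ge0.
  rewrite -sqrtr_sqr; apply: ler_wsqrtr.
  rewrite -!nm_sq.
  have := nm_sqr_le _ _ (nm_ge0 d1) nd1; have := nm_sqr_le _ _ (nm_ge0 d2) nd2.
  have := nm_sqr_le _ _ (nm_ge0 d3) nd3; have := nm_sqr_le _ _ (nm_ge0 d4) nd4.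
  have := nm_sqr_le _ _ (nm_ge0 d5) nd5.
  have := sqr_ge0 T; clear; move=> *; lra.
have a0 : 0 < 200%:R * 10000%:R :> R by rewrite mulr_gt0.
have : tau0 * N5 <= beta.
  rewrite /tau0 mulrC ler_pdivrMr //; clear -hN5 hT; lra.
rewrite /beta; clear; move=> h; lra.
Qed.
End S.

Theorem mainTheorem1 (R : realType) :
  (exists eps : R, 0 < eps /\
     forall x0 x1 y0 y1 y2 : R[i],
       norm5 (x0 - x0s R) (x1 - x1s R) (y0 - y0s R) (y1 - y1s R) (y2 - y2s R) < eps ->
       abscissa (pxy (x0s R) (x1s R) (y0s R) (y1s R) (y2s R))
         <= abscissa (pxy x0 x1 y0 y1 y2))
  /\
  (exists tau : R, 0 < tau /\
   exists eps : R, 0 < eps /\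
     forall x0 x1 y0 y1 y2 : R[i],
       norm5 (x0 - x0s R) (x1 - x1s R) (y0 - y0s R) (y1 - y1s R) (y2 - y2s R) < eps ->
       abscissa (pxy (x0s R) (x1s R) (y0s R) (y1s R) (y2s R))
         + tau * norm5 (x0 - x0s R) (x1 - x1s R) (y0 - y0s R) (y1 - y1s R) (y2 - y2s R)
         <= abscissa (pxy x0 x1 y0 y1 y2)).
Proof.
have e0 : 0 < eps0 R by rewrite /eps0 invr_gt0 mulr_gt0 // exprn_gt0.
have t0 : 0 < tau0 R by rewrite /tau0 invr_gt0 mulr_gt0.
split.
  exists (eps0 R); split => // x0 x1 y0 y1 y2 h.
  apply: le_trans _ (@main_ineq R x0 x1 y0 y1 y2 h).
  by rewrite lerDl mulr_ge0 // ?sqrtr_ge0 // ltW.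
exists (tau0 R); split => //; exists (eps0 R); split => // x0 x1 y0 y1 y2 h.
exact: (@main_ineq R x0 x1 y0 y1 y2 h).
Qed.
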